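(* Let $S,T$ be left semi-braces, $\sigma:T\to\mathrm{Aut}(S)$ a homomorphism from $(T,\cdot)$ into the automorphism group of $(S,+,\cdot)$ (write ${}^ua=\sigma(u)(a)$), and $\delta:S\to\mathrm{End}(T)$ an anti-homomorphism from $(S,+)$ into the automorphism group of $(T,+)$ (write $u^a=\delta(a)(u)$) such that $$(uv)^{\lambda_a({}^ub)}+u\left((u^{-1})^b+w\right)=u\left(v^b+w\right)$$ for all $a,b\in S$, $u,v,w\in T$. Then the double semidirect product of $S$ and $T$ via $\sigma$ and $\delta$, i.e. $S\times T$ with $(a,u)+(b,v)=(a+b,u^b+v)$ and $(a,u)(b,v)=(a\,{}^ub,uv)$, is a left semi-brace. If moreover $S$ and $T$ are left cancellative left semi-braces, then this double semidirect product is a left cancellative left semi-brace.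
   Context: A left semi-brace is a triple $(S,+,\cdot)$ such that $(S,+)$ is a semigroup, $(S,\cdot)$ is a group, and $a(b+c)=ab+a(a^{-1}+c)$ for all $a,b,c\in S$; it is left cancellative if $(S,+)$ is left cancellative. Set $\lambda_a(b)=a(a^{-1}+b)$. An automorphism of $(S,+,\cdot)$ is a bijection preserving both operations. That $\delta$ is an anti-homomorphism from $(S,+)$ means $u^{a+b}=(u^a)^b$ for all $a,b\in S$, $u\in T$. *)

(* Defs.v *)
Definition associative {S : Type} (op : S -> S -> S) : Prop :=
  forall a b c, op a (op b c) = op (op a b) c.

Definition group_axioms {S : Type} (mul : S -> S -> S) (one : S) (inv : S -> S) : Prop :=
  associative mul /\
  (forall a, mul one a = a) /\ (forall a, mul a one = a) /\
  (forall a, mul (inv a) a = one) /\ (forall a, mul a (inv a) = one).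

Definition semi_brace_axioms {S : Type} (add mul : S -> S -> S) (one : S) (inv : S -> S) : Prop :=
  associative add /\ group_axioms mul one inv /\
  (forall a b c, mul a (add b c) = add (mul a b) (mul a (add (inv a) c))).

Definition is_left_semi_brace {S : Type} (add mul : S -> S -> S) : Prop :=
  exists (one : S) (inv : S -> S), semi_brace_axioms add mul one inv.

Definition left_cancellative {S : Type} (add : S -> S -> S) : Prop :=
  forall a b c, add a b = add a c -> b = c.

Definition lam {S : Type} (add mul : S -> S -> S) (inv : S -> S) (a b : S) : S :=
  mul a (add (inv a) b).

Definition bijective {S : Type} (f : S -> S) : Prop :=
  exists g : S -> S, (forall x, g (f x) = x) /\ (forall y, f (g y) = y).

Definition dsp_add {S T : Type} (addS : S -> S -> S) (addT : T -> T -> T)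
  (delta : S -> T -> T) (x y : S * T) : S * T :=
  (addS (fst x) (fst y), addT (delta (fst y) (snd x)) (snd y)).

Definition dsp_mul {S T : Type} (mulS : S -> S -> S) (mulT : T -> T -> T)
  (sigma : T -> S -> S) (x y : S * T) : S * T :=
  (mulS (fst x) (sigma (snd x) (fst y)), mulT (snd x) (snd y)).

(* Main.v *)
Require Import Defs.
From Stdlib Require Import Setoid.

Theorem corollary39
  (S T : Type)
  (addS mulS : S -> S -> S) (oneS : S) (invS : S -> S)
  (addT mulT : T -> T -> T) (oneT : T) (invT : T -> T)
  (HS : semi_brace_axioms addS mulS oneS invS)
  (HT : semi_brace_axioms addT mulT oneT invT)
  (sigma : T -> S -> S) (delta : S -> T -> T)
  (* sigma(u) is an automorphism of (S,+,.) *)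
  (Hsig_bij : forall u, bijective (sigma u))
  (Hsig_add : forall u a b, sigma u (addS a b) = addS (sigma u a) (sigma u b))
  (Hsig_mul : forall u a b, sigma u (mulS a b) = mulS (sigma u a) (sigma u b))
  (* sigma is a homomorphism from (T,.) *)
  (Hsig_hom : forall u v a, sigma (mulT u v) a = sigma u (sigma v a))
  (* delta(a) is an automorphism of (T,+) *)
  (Hdel_bij : forall a, bijective (delta a))
  (Hdel_add : forall a u v, delta a (addT u v) = addT (delta a u) (delta a v))
  (* delta is an anti-homomorphism from (S,+): u^(a+b) = (u^a)^b *)
  (Hdel_anti : forall a b u, delta (addS a b) u = delta b (delta a u))
  (* (uv)^{lambda_a(^u b)} + u((u^{-1})^b + w) = u(v^b + w) *)
  (Hcompat : forall (a b : S) (u v w : T),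
      addT (delta (lam addS mulS invS a (sigma u b)) (mulT u v))
           (mulT u (addT (delta b (invT u)) w))
      = mulT u (addT (delta b v) w)) :
  is_left_semi_brace (dsp_add addS addT delta) (dsp_mul mulS mulT sigma) /\
  (left_cancellative addS -> left_cancellative addT ->
   left_cancellative (dsp_add addS addT delta)).
Proof.
  destruct HS as [SaA [[SmA [Sm1l [Sm1r [SmVl SmVr]]]] Sbr]].
  destruct HT as [TaA [[TmA [Tm1l [Tm1r [TmVl TmVr]]]] Tbr]].
  assert (sig1 : forall a, sigma oneT a = a).
  { intro a. destruct (Hsig_bij oneT) as [g [Hg1 Hg2]].
    rewrite <- (Hg1 (sigma oneT a)) at 1. rewrite <- Hsig_hom, Tm1l. apply Hg1. }
  assert (sigu1 : forall u, sigma u oneS = oneS).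
  { intro u. set (s := sigma u oneS).
    assert (E : s = mulS s s) by (unfold s; rewrite <- Hsig_mul, Sm1l; reflexivity).
    transitivity (mulS (mulS (invS s) s) s); [rewrite SmVl, Sm1l; reflexivity|].
    rewrite <- SmA, <- E. apply SmVl. }
  assert (sigK : forall u x, sigma u (sigma (invT u) x) = x).
  { intros u x. rewrite <- Hsig_hom, TmVr. apply sig1. }
  split.
  - exists (oneS, oneT), (fun x => (sigma (invT (snd x)) (invS (fst x)), invT (snd x))).
    split; [|split; [split; [|split; [|split; [|split]]]|]].
    + intros [a u] [b v] [c w]; unfold dsp_add; simpl.
      rewrite SaA, Hdel_anti, Hdel_add, TaA. reflexivity.
    + intros [a u] [b v] [c w]; unfold dsp_mul; simpl.
      rewrite Hsig_mul, Hsig_hom, SmA, TmA. reflexivity.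
    + intros [a u]; unfold dsp_mul; simpl. rewrite sig1, Sm1l, Tm1l. reflexivity.
    + intros [a u]; unfold dsp_mul; simpl. rewrite sigu1, Sm1r, Tm1r. reflexivity.
    + intros [a u]; unfold dsp_mul; simpl. rewrite <- Hsig_mul, SmVl, sigu1, TmVl. reflexivity.
    + intros [a u]; unfold dsp_mul; simpl. rewrite sigK, SmVr, TmVr. reflexivity.
    + intros [a u] [b v] [c w]; unfold dsp_mul, dsp_add; simpl.
      rewrite !Hsig_add, !sigK, <- (Hcompat a c u v w), Sbr.
      unfold lam. reflexivity.
  - intros cS cT [a u] [b v] [c w]; unfold dsp_add; simpl. intro H.
    injection H as H1 H2. apply cS in H1. subst c. apply cT in H2. subst w. reflexivity.
Qed.
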